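(* $\operatorname{BWT}_2\times\lim\le_{\mathrm{sW}}\operatorname{Proj}^-_\mathbb{R}$.
   Context: Represented spaces: a representation of a set $X$ is a partial surjection $\delta_X:\subseteq\mathbb{N}^\mathbb{N}\to X$. For a partial multi-valued function $f:\subseteq X\rightrightarrows Y$, a realizer is a partial $F:\subseteq\mathbb{N}^\mathbb{N}\to\mathbb{N}^\mathbb{N}$ with $\delta_Y(F(p))\in f(\delta_X(p))$ for all $p$ with $\delta_X(p)\in\mathrm{dom}(f)$. Strong Weihrauch reducibility $f\le_{\mathrm{sW}}g$: there are computable partial $H,K:\subseteq\mathbb{N}^\mathbb{N}\to\mathbb{N}^\mathbb{N}$ with $H\circ G\circ K$ a realizer of $f$ for every realizer $G$ of $g$. For multi-valued $f,g$, the product $f\times g$ maps $(x,y)\in\mathrm{dom}(f)\times\mathrm{dom}(g)$ to $f(x)\times g(y)$. $\operatorname{BWT}_2:\{0,1\}^\mathbb{N}\rightrightarrows\{0,1\}$ maps a binary sequence to the set of values occurring in it infinitely often. $\lim:\subseteq(\mathbb{N}^\mathbb{N})^\mathbb{N}\to\mathbb{N}^\mathbb{N}$ maps a convergent sequence in Baire space to its limit. $\mathbb{R}$ has the Cauchy representation. $\mathcal{A}_-(\mathbb{R})$: closed subsets of $\mathbb{R}$, a name of $A$ being an enumeration of rational open intervals whose union is $\mathbb{R}\setminus A$. $\operatorname{Proj}^-_\mathbb{R}:\subseteq\mathbb{R}\times\mathcal{A}_-(\mathbb{R})\rightrightarrows\mathbb{R}$ maps $(x,A)$ with $A$ nonempty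 closed to the set of $y\in A$ with $|x-y|=d(x,A)$. *)

(* Defs.v *)
From Stdlib Require Import Reals QArith Qreals Arith List Rtopology.
Open Scope R_scope.

Definition baire := nat -> nat.

(** A representation of X: the graph of a partial map delta :⊆ N^N -> X.
    (p names x)  <->  delta p x. *)
Definition repr (X : Type) := baire -> X -> Prop.

Definition mvf (X Y : Type) := X -> Y -> Prop.
Definition mdom {X Y} (f : mvf X Y) (x : X) : Prop := exists y, f x y.

Definition mvprod {X Y U V} (f : mvf X Y) (g : mvf U V) : mvf (X * U) (Y * V) :=
  fun xu yv => f (fst xu) (fst yv) /\ g (snd xu) (snd yv).

(** Realizers: arbitrary partial functions N^N -> N^N (as option-valued maps). *)
Definition realizer {X Y} (dX : repr X) (dY : repr Y) (f : mvf X Y)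
  (F : baire -> option baire) : Prop :=
  forall p x, dX p x -> mdom f x ->
    exists q, F p = Some q /\ exists y, dY q y /\ f x y.

Inductive code : Type :=
| cZero : code
| cSucc : code
| cProj : nat -> code
| cOracle : code
| cComp : code -> list code -> code
| cRec : code -> code -> code
| cMu : code -> code.

Inductive ev (p : baire) : code -> list nat -> nat -> Prop :=
| ev_zero : forall v, ev p cZero v 0
| ev_succ : forall v, ev p cSucc v (S (hd 0%nat v))
| ev_proj : forall i v, ev p (cProj i) v (nth i v 0%nat)
| ev_oracle : forall v, ev p cOracle v (p (hd 0%nat v))
| ev_comp : forall f gs v ws y, evs p gs v ws -> ev p f ws y -> ev p (cComp f gs) v y
| ev_rec0 : forall f g v y, ev p f v y -> ev p (cRec f g) (0%nat :: v) y
| ev_recS : forall f g n v z y,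
    ev p (cRec f g) (n :: v) z -> ev p g (n :: z :: v) y ->
    ev p (cRec f g) (S n :: v) y
| ev_mu : forall f v n,
    ev p f (n :: v) 0%nat ->
    (forall m, (m < n)%nat -> exists k, ev p f (m :: v) (S k)) ->
    ev p (cMu f) v n
with evs (p : baire) : list code -> list nat -> list nat -> Prop :=
| evs_nil : forall v, evs p nil v nil
| evs_cons : forall g gs v w ws, ev p g v w -> evs p gs v ws -> evs p (g :: gs) v (w :: ws).

Definition computes (e : code) (p q : baire) : Prop :=
  forall n, ev p e (n :: nil) (q n).

Definition sW_reducible {X Y U V}
  (dX : repr X) (dY : repr Y) (f : mvf X Y)
  (dU : repr U) (dV : repr V) (g : mvf U V) : Prop :=
  exists eH eK : code,
    forall G : baire -> option baire, realizer dU dV g G ->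
      forall p x, dX p x -> mdom f x ->
        exists q, computes eK p q /\
        exists r, G q = Some r /\
        exists s, computes eH r s /\
        exists y, dY s y /\ f x y.

Definition cpair (i j : nat) : nat := ((i + j) * (i + j + 1) / 2 + j)%nat.

Definition dprod {X Y} (dX : repr X) (dY : repr Y) : repr (X * Y) :=
  fun p xy => dX (fun n => p (2 * n)%nat) (fst xy) /\
              dY (fun n => p (2 * n + 1)%nat) (snd xy).

Definition zdec (n : nat) : Z :=
  if Nat.even n then Z.of_nat (Nat.div2 n) else (- Z.of_nat (S (Nat.div2 n)))%Z.
Definition qdec (i j : nat) : R := Q2R (Qmake (zdec i) (Pos.of_succ_nat j)).

Definition dCantor : repr (nat -> bool) :=
  fun p s => forall n, p n = (if s n then 1 else 0)%nat.

Definition dBool : repr bool :=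
  fun p b => p 0%nat = (if b then 1 else 0)%nat.

Definition dBaire : repr baire := fun p q => forall n, p n = q n.

Definition dSeq : repr (nat -> baire) :=
  fun p qs => forall i n, p (cpair i n) = qs i n.

Definition dR : repr R :=
  fun p x => forall n, exists i j, p n = cpair i j /\ Rabs (qdec i j - x) <= (/ 2) ^ n.

(** A_-(R): p enumerates rational open intervals (p(n) = 0: no interval,
    p(n) = 1 + <<i,j>,<k,l>>: the interval (qdec i j, qdec k l)) whose union
    is the complement of A. *)
Definition dA : repr (R -> Prop) :=
  fun p A => forall x, A x <->
    ~ (exists n i j k l, p n = S (cpair (cpair i j) (cpair k l)) /\
                         qdec i j < x < qdec k l).

Definition BWT2 : mvf (nat -> bool) bool :=
  fun s b => forall N, exists n, (N <= n)%nat /\ s n = b.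

Definition lim : mvf (nat -> baire) baire :=
  fun qs q => forall k, exists N, forall i, (N <= i)%nat ->
                forall n, (n < k)%nat -> qs i n = q n.

Definition is_inf (S : R -> Prop) (m : R) : Prop :=
  (forall s, S s -> m <= s) /\ (forall m', (forall s, S s -> m' <= s) -> m' <= m).

Definition Proj : mvf (R * (R -> Prop)) R :=
  fun xA y =>
    let x := fst xA in let A := snd xA in
    closed_set A /\ (exists a, A a) /\ A y /\
    is_inf (fun r => exists a, A a /\ r = Rabs (x - a)) (Rabs (x - y)).

(* Main.v *)
Require Import Defs.
From Stdlib Require Import Reals.
From Stdlib Require Import Arith Lia List Lra Classical ZArith QArith Qreals.
Import ListNotations.
Local Open Scope nat_scope.

Notation ar v i := (nth i v 0%nat).

Section Lib.
Variable p : baire.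

Definition CF (e : code) (F : list nat -> nat) : Prop := forall v, ev p e v (F v).

Lemma CF_ext e F G : CF e F -> (forall v, F v = G v) -> CF e G.
Proof. intros H E v. rewrite <- E. apply H. Qed.

Lemma CF_comp f gs F Gs : CF f F -> Forall2 CF gs Gs ->
  CF (cComp f gs) (fun v => F (map (fun G => G v) Gs)).
Proof.
  intros Hf Hg v. eapply ev_comp; [|apply Hf].
  induction Hg; simpl; constructor; auto.
Qed.

Lemma CF_proj i : CF (cProj i) (fun v => ar v i).
Proof. intro v. constructor. Qed.

Lemma CF_zero : CF cZero (fun _ => 0%nat).
Proof. intro v. constructor. Qed.

Lemma CF_succ : CF cSucc (fun v => S (ar v 0)).
Proof. intro v. replace (ar v 0) with (hd 0%nat v). constructor. destruct v; reflexivity. Qed.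

Lemma CF_oracle : CF cOracle (fun v => p (ar v 0)).
Proof. intro v. replace (ar v 0) with (hd 0%nat v). constructor. destruct v; reflexivity. Qed.

Fixpoint primrec (F G : list nat -> nat) (n : nat) (v : list nat) : nat :=
  match n with 0 => F v | S n' => G (n' :: primrec F G n' v :: v) end.

Lemma ev_rec f g F G : CF f F -> CF g G -> forall n v, ev p (cRec f g) (n :: v) (primrec F G n v).
Proof.
  intros Hf Hg n v. induction n; simpl.
  - constructor. apply Hf.
  - eapply ev_recS. apply IHn. apply Hg.
Qed.

Lemma ev_mu_lemma f F v n : CF f F -> F (n :: v) = 0%nat ->
  (forall m, (m < n)%nat -> F (m :: v) <> 0%nat) -> ev p (cMu f) v n.
Proof.
  intros Hf H0 Hm. constructor.
  - rewrite <- H0. apply Hf.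
  - intros m Hlt. specialize (Hm m Hlt). destruct (F (m :: v)) eqn:E. congruence.
    exists n0. rewrite <- E. apply Hf.
Qed.

End Lib.

Fixpoint cconst (n : nat) : code := match n with 0 => cZero | S n => cComp cSucc [cconst n] end.

Lemma CF_const p n : CF p (cconst n) (fun _ => n).
Proof.
  induction n; intro v; simpl. constructor.
  eapply ev_comp. constructor. apply IHn. constructor. apply (ev_succ p [n]).
Qed.

Definition rk (k : nat) (f g : code) : code := cComp (cRec f g) (map cProj (seq 0 (S k))).

Lemma evs_proj p l v : evs p (map cProj l) v (map (fun i => ar v i) l).
Proof. induction l; simpl; constructor; auto. constructor. Qed.

Lemma CF_rk p k f g F G : CF p f F -> CF p g G ->
  CF p (rk k f g) (fun v => primrec F G (ar v 0) (map (fun i => ar v i) (seq 1 k))).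
Proof.
  intros Hf Hg v. unfold rk. eapply ev_comp. apply evs_proj.
  simpl. apply ev_rec; auto.
Qed.

Create HintDb cfdb.
#[export] Hint Resolve CF_proj CF_zero CF_succ CF_oracle CF_const : cfdb.

Ltac cf := first [ eassumption | solve [eauto with cfdb]
  | (eapply CF_comp; [cf | cfs]) ]
with cfs := first [ apply Forall2_nil | (apply Forall2_cons; [cf | cfs]) ].

Ltac cfx := eapply CF_ext; [cf | intro v; cbn [map nth]; try reflexivity].
Ltac cfrk := eapply CF_ext; [apply CF_rk; cf | intro v; simpl].

Definition cadd := rk 1 (cProj 0) (cComp cSucc [cProj 1]).
Lemma CF_add p : CF p cadd (fun v => ar v 0 + ar v 1).
Proof. cfrk. generalize (ar v 0); induction n; simpl; auto. Qed.
#[export] Hint Resolve CF_add : cfdb.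

Definition cpred := rk 0 cZero (cProj 0).
Lemma CF_pred p : CF p cpred (fun v => Nat.pred (ar v 0)).
Proof. cfrk. destruct (ar v 0); reflexivity. Qed.
#[export] Hint Resolve CF_pred : cfdb.

Definition csubr := rk 1 (cProj 0) (cComp cpred [cProj 1]).
Definition csub := cComp csubr [cProj 1; cProj 0].
Lemma CF_sub p : CF p csub (fun v => ar v 0 - ar v 1).
Proof.
  assert (H: CF p csubr (fun v => ar v 1 - ar v 0)).
  { cfrk. generalize (ar v 0). induction n; simpl. lia. rewrite IHn. lia. }
  unfold csub. cfx.
Qed.
#[export] Hint Resolve CF_sub : cfdb.

Definition cmul := rk 1 cZero (cComp cadd [cProj 1; cProj 2]).
Lemma CF_mul p : CF p cmul (fun v => ar v 0 * ar v 1).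
Proof. cfrk. generalize (ar v 0); induction n; simpl; auto. rewrite IHn. lia. Qed.
#[export] Hint Resolve CF_mul : cfdb.

Definition csg := rk 0 cZero (cconst 1).
Lemma CF_sg p : CF p csg (fun v => match ar v 0 with 0 => 0 | _ => 1 end).
Proof. cfrk. destruct (ar v 0); reflexivity. Qed.
#[export] Hint Resolve CF_sg : cfdb.

Definition cifz := rk 2 (cProj 0) (cProj 3).
Lemma CF_ifz p : CF p cifz (fun v => match ar v 0 with 0 => ar v 1 | _ => ar v 2 end).
Proof. cfrk. destruct (ar v 0); reflexivity. Qed.
#[export] Hint Resolve CF_ifz : cfdb.

Definition par (n : nat) : nat := if Nat.odd n then 1 else 0.
Definition cpar := rk 0 cZero (cComp csub [cconst 1; cProj 1]).
Lemma CF_par p : CF p cpar (fun v => par (ar v 0)).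
Proof. cfrk. generalize (ar v 0); induction n; simpl. reflexivity.
  rewrite IHn. unfold par. rewrite Nat.odd_succ, <- Nat.negb_odd. destruct (Nat.odd n); reflexivity. Qed.
#[export] Hint Resolve CF_par : cfdb.

Lemma par_S n : par (S n) = 1 - par n.
Proof. unfold par. rewrite Nat.odd_succ, <- Nat.negb_odd. destruct (Nat.odd n); reflexivity. Qed.
Lemma par_le n : par n <= 1.
Proof. unfold par. destruct (Nat.odd n); lia. Qed.

Lemma div2_S n : Nat.div2 (S n) = Nat.div2 n + par n.
Proof.
  induction n. reflexivity.
  change (Nat.div2 (S (S n))) with (S (Nat.div2 n)).
  rewrite IHn. rewrite par_S. pose proof (par_le n). lia.
Qed.

Definition chalf := rk 0 cZero (cComp cadd [cProj 1; cComp cpar [cProj 0]]).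
Lemma CF_half p : CF p chalf (fun v => Nat.div2 (ar v 0)).
Proof. cfrk. generalize (ar v 0); induction n. reflexivity. cbn [primrec nth].
  rewrite IHn, div2_S. reflexivity. Qed.
#[export] Hint Resolve CF_half : cfdb.

Definition b2 (b : bool) : nat := if b then 1 else 0.
Definition clt := cComp csg [cComp csub [cProj 1; cProj 0]].
Lemma CF_lt p : CF p clt (fun v => b2 (ar v 0 <? ar v 1)).
Proof. unfold clt. cfx. unfold b2. destruct (ar v 0 <? ar v 1) eqn:E.
  apply Nat.ltb_lt in E. destruct (ar v 1 - ar v 0) eqn:E2; lia.
  apply Nat.ltb_ge in E. replace (ar v 1 - ar v 0) with 0 by lia. reflexivity. Qed.
#[export] Hint Resolve CF_lt : cfdb.

Definition cle := cComp clt [cProj 0; cComp cSucc [cProj 1]].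
Lemma CF_le p : CF p cle (fun v => b2 (ar v 0 <=? ar v 1)).
Proof. unfold cle. cfx. Qed.
#[export] Hint Resolve CF_le : cfdb.

Definition cneq := cComp csg [cComp cadd [cComp csub [cProj 0; cProj 1]; cComp csub [cProj 1; cProj 0]]].
Lemma CF_neq p : CF p cneq (fun v => b2 (negb (ar v 0 =? ar v 1))).
Proof. unfold cneq. cfx. unfold b2.
  destruct (ar v 0 =? ar v 1) eqn:E. apply Nat.eqb_eq in E. rewrite E, Nat.sub_diag. reflexivity.
  apply Nat.eqb_neq in E. destruct (ar v 0 - ar v 1 + (ar v 1 - ar v 0)) eqn:E2; simpl; lia. Qed.
#[export] Hint Resolve CF_neq : cfdb.

Definition cmax := cComp cadd [cProj 0; cComp csub [cProj 1; cProj 0]].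
Lemma CF_max p : CF p cmax (fun v => Nat.max (ar v 0) (ar v 1)).
Proof. unfold cmax. cfx. lia. Qed.
#[export] Hint Resolve CF_max : cfdb.

Definition cdivg := cComp csub [cComp cSucc [cProj 1];
   cComp cmul [cComp cSucc [cProj 0]; cComp cSucc [cProj 2]]].
Definition cdivS := cMu cdivg.
Lemma CF_divS p : CF p cdivS (fun v => ar v 0 / S (ar v 1)).
Proof.
  assert (H : CF p cdivg (fun v => S (ar v 1) - S (ar v 0) * S (ar v 2))).
  { unfold cdivg. cfx. }
  intro v. eapply ev_mu_lemma. apply H.
  - cbn [nth]. set (a := ar v 0). set (b := ar v 1).
    pose proof (Nat.div_mod a (S b) ltac:(lia)).
    pose proof (Nat.mod_upper_bound a (S b) ltac:(lia)). nia.
  - intros m Hm. cbn [nth]. set (a := ar v 0) in *. set (b := ar v 1) in *.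
    pose proof (Nat.div_mod a (S b) ltac:(lia)).
    assert (S m * S b <= a / S b * S b) by nia. nia.
Qed.
#[export] Hint Resolve CF_divS : cfdb.

Fixpoint pow4 (n : nat) : nat := match n with 0 => 1 | S n => 4 * pow4 n end.
Definition cpow4 := rk 0 (cconst 1) (cComp cmul [cconst 4; cProj 1]).
Lemma CF_pow4 p : CF p cpow4 (fun v => pow4 (ar v 0)).
Proof. cfrk. generalize (ar v 0); induction n; simpl; auto. Qed.
#[export] Hint Resolve CF_pow4 : cfdb.

Fixpoint tri (d : nat) : nat := match d with 0 => 0 | S d => tri d + S d end.
Definition ctri := rk 0 cZero (cComp cadd [cProj 1; cComp cSucc [cProj 0]]).
Lemma CF_tri p : CF p ctri (fun v => tri (ar v 0)).
Proof. cfrk. generalize (ar v 0); induction n; simpl; auto. Qed.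
#[export] Hint Resolve CF_tri : cfdb.

Lemma tri2 d : 2 * tri d = d * (d + 1).
Proof. induction d; simpl in *; lia. Qed.

Lemma cpair_tri i j : cpair i j = tri (i + j) + j.
Proof.
  unfold cpair. f_equal. pose proof (tri2 (i+j)).
  rewrite <- H. rewrite Nat.mul_comm. apply Nat.div_mul. lia.
Qed.

Definition ccpair := cComp cadd [cComp ctri [cComp cadd [cProj 0; cProj 1]]; cProj 1].
Lemma CF_cpair p : CF p ccpair (fun v => cpair (ar v 0) (ar v 1)).
Proof. unfold ccpair. cfx. rewrite cpair_tri. reflexivity. Qed.
#[export] Hint Resolve CF_cpair : cfdb.

Fixpoint unpair (w : nat) : nat * nat :=
  match w with 0 => (0, 0) | S w => let (i, j) := unpair w in
    match i with 0 => (S j, 0) | S i => (i, S j) end end.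

Lemma unpair_spec w : tri (fst (unpair w) + snd (unpair w)) + snd (unpair w) = w.
Proof.
  induction w; simpl. reflexivity.
  destruct (unpair w) as [i j]; simpl in *. destruct i; simpl.
  - rewrite !Nat.add_0_r in *. simpl in IHw. lia.
  - replace (i + S j) with (S (i + j)) by lia. simpl in *. lia.
Qed.

Lemma tri_mono a b : a <= b -> tri a <= tri b.
Proof. induction 1; simpl; lia. Qed.

Lemma tri_inj d j d' j' : j <= d -> j' <= d' -> tri d + j = tri d' + j' -> d = d' /\ j = j'.
Proof.
  intros H1 H2 E.
  destruct (lt_eq_lt_dec d d') as [[Hl|Hl]|Hl].
  - pose proof (tri_mono (S d) d' Hl). simpl in H. lia.
  - subst. lia.
  - pose proof (tri_mono (S d') d Hl). simpl in H. lia.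
Qed.

Lemma unpair_cpair i j : unpair (cpair i j) = (i, j).
Proof.
  rewrite cpair_tri. pose proof (unpair_spec (tri (i+j) + j)).
  destruct (unpair (tri (i + j) + j)) as [a b]; simpl in *.
  apply tri_inj in H; try lia. destruct H. f_equal; lia.
Qed.

Lemma cpair_unpair w : cpair (fst (unpair w)) (snd (unpair w)) = w.
Proof. rewrite cpair_tri. apply unpair_spec. Qed.

Lemma cpair_inj i j k l : cpair i j = cpair k l -> i = k /\ j = l.
Proof. intro E. pose proof (unpair_cpair i j). rewrite E, unpair_cpair in H. injection H; auto. Qed.

Definition cddg := cComp csub [cComp cSucc [cProj 1]; cComp ctri [cComp cSucc [cProj 0]]].
Definition cdd := cMu cddg.
Lemma CF_dd p : CF p cdd (fun v => fst (unpair (ar v 0)) + snd (unpair (ar v 0))).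
Proof.
  assert (H : CF p cddg (fun v => S (ar v 1) - tri (S (ar v 0)))).
  { unfold cddg. cfx. }
  intro v. pose proof (unpair_spec (ar v 0)).
  eapply ev_mu_lemma. apply H.
  - cbn [nth]. simpl tri. lia.
  - intros m Hm. cbn [nth]. pose proof (tri_mono (S m) (fst (unpair (ar v 0)) + snd (unpair (ar v 0))) Hm).
    lia.
Qed.
#[export] Hint Resolve CF_dd : cfdb.

Definition csnd := cComp csub [cProj 0; cComp ctri [cdd]].
Lemma CF_snd p : CF p csnd (fun v => snd (unpair (ar v 0))).
Proof. unfold csnd. cfx. pose proof (unpair_spec (ar v 0)). lia. Qed.
#[export] Hint Resolve CF_snd : cfdb.

Definition cfst := cComp csub [cdd; csnd].
Lemma CF_fst p : CF p cfst (fun v => fst (unpair (ar v 0))).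
Proof. unfold cfst. cfx. lia. Qed.
#[export] Hint Resolve CF_fst : cfdb.

Section K.
Variable p : baire.

Fixpoint c1 (L : nat) : nat := match L with 0 => 0 | S L => c1 L + p (2 * L) end.
Definition qv (j m : nat) : nat := p (2 * cpair j m + 1).
Fixpoint exf (t m v L : nat) : nat := match L with 0 => 0
  | S L => Nat.max (exf t m v L) (b2 (t <=? L) * b2 (negb (qv L m =? v))) end.
Definition Dig (sd L P : nat) : nat :=
  match par P with
  | 0 => b2 (Nat.div2 P <? match sd with 0 => c1 L | _ => L - c1 L end)
  | _ => let c := Nat.div2 P in let m := fst (unpair c) in let w := snd (unpair c) in
         exf (snd (unpair w)) m (fst (unpair w)) L
  end.
Fixpoint Horn (sd L P : nat) : nat := match P with 0 => 0 | S P => 4 * Horn sd L P + Dig sd L P end.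
Definition Kq (n : nat) : nat :=
  match par n with 0 => 0 | _ =>
    let L := Nat.div2 n in let E := pow4 L in
    S (cpair (cpair (2 * (E + Horn 0 L L) - 1) (E - 1)) (cpair (2 * (E + Horn 1 L L)) (E - 1)))
  end.

Definition cc1 := rk 0 cZero (cComp cadd [cProj 1; cComp cOracle [cComp cmul [cconst 2; cProj 0]]]).
Lemma CF_c1 : CF p cc1 (fun v => c1 (ar v 0)).
Proof. cfrk. generalize (ar v 0); induction n; simpl; auto. Qed.
Hint Resolve CF_c1 : cfdb.

Definition cqv := cComp cOracle [cComp cadd [cComp cmul [cconst 2; ccpair]; cconst 1]].
Lemma CF_qv : CF p cqv (fun v => qv (ar v 0) (ar v 1)).
Proof. unfold cqv. cfx. Qed.
Hint Resolve CF_qv : cfdb.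

Definition cex := rk 3 cZero (cComp cmax [cProj 1; cComp cmul [cComp cle [cProj 2; cProj 0];
   cComp cneq [cComp cqv [cProj 0; cProj 3]; cProj 4]]]).
Lemma CF_ex : CF p cex (fun v => exf (ar v 1) (ar v 2) (ar v 3) (ar v 0)).
Proof. cfrk. generalize (ar v 0); induction n; simpl; auto. Qed.
Hint Resolve CF_ex : cfdb.

Definition cP := cProj 2.
Definition cc := cComp chalf [cP].
Definition cw := cComp csnd [cc].
Definition cDig := cComp cifz [cComp cpar [cP];
  cComp clt [cComp chalf [cP]; cComp cifz [cProj 0; cComp cc1 [cProj 1]; cComp csub [cProj 1; cComp cc1 [cProj 1]]]];
  cComp cex [cProj 1; cComp csnd [cw]; cComp cfst [cc]; cComp cfst [cw]]].
Lemma CF_Dig : CF p cDig (fun v => Dig (ar v 0) (ar v 1) (ar v 2)).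
Proof. unfold cDig, cw, cc, cP. cfx.
  all: unfold Dig; destruct (par (ar v 2)); try reflexivity; destruct (ar v 0); reflexivity. Qed.
Hint Resolve CF_Dig : cfdb.

Definition cHorn := rk 2 cZero (cComp cadd [cComp cmul [cconst 4; cProj 1]; cComp cDig [cProj 2; cProj 3; cProj 0]]).
Lemma CF_Horn : CF p cHorn (fun v => Horn (ar v 1) (ar v 2) (ar v 0)).
Proof. cfrk. generalize (ar v 0); induction n; simpl; auto. rewrite IHn. reflexivity. Qed.
Hint Resolve CF_Horn : cfdb.

Definition cL := cComp chalf [cProj 0].
Definition cE := cComp cpow4 [cL].
Definition cKq := cComp cifz [cComp cpar [cProj 0]; cZero;
  cComp cSucc [cComp ccpair [
    cComp ccpair [cComp csub [cComp cmul [cconst 2; cComp cadd [cE; cComp cHorn [cL; cZero; cL]]]; cconst 1];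
                  cComp csub [cE; cconst 1]];
    cComp ccpair [cComp cmul [cconst 2; cComp cadd [cE; cComp cHorn [cL; cconst 1; cL]]];
                  cComp csub [cE; cconst 1]]]]].
Lemma CF_Kq : CF p cKq (fun v => Kq (ar v 0)).
Proof. unfold cKq, cE, cL. cfx. all: unfold Kq; destruct (par (ar v 0)); reflexivity. Qed.

End K.

Section H.
Variable r : baire.

Definition extu (i : nat) : nat := match par i with 0 => Nat.div2 i | _ => S (Nat.div2 i) end.
Definition extK (P : nat) : nat :=
  let x := r (2 * P + 6) in let i := fst (unpair x) in let j := snd (unpair x) in
  (2 * extu i * pow4 (S P) + S j) / S (2 * j + 1).
Definition ext (P : nat) : nat := extK P - 4 * (extK P / S 3).

Definition cx := cComp cOracle [cComp cadd [cComp cmul [cconst 2; cProj 0]; cconst 6]].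
Definition ci := cComp cfst [cx].
Definition cj := cComp csnd [cx].
Definition cu := cComp cifz [cComp cpar [ci]; cComp chalf [ci]; cComp cSucc [cComp chalf [ci]]].
Definition cextK := cComp cdivS [cComp cadd [cComp cmul [cComp cmul [cconst 2; cu]; cComp cpow4 [cComp cSucc [cProj 0]]]; cComp cSucc [cj]];
   cComp cadd [cComp cmul [cconst 2; cj]; cconst 1]].
Lemma CF_extK : CF r cextK (fun v => extK (ar v 0)).
Proof. unfold cextK, cu, ci, cj, cx. cfx.
  Qed.
Hint Resolve CF_extK : cfdb.
Definition cext := cComp csub [cextK; cComp cmul [cconst 4; cComp cdivS [cextK; cconst 3]]].
Lemma CF_ext' : CF r cext (fun v => ext (ar v 0)).
Proof. unfold cext. cfx. Qed.
Hint Resolve CF_ext' : cfdb.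

Definition cG := cComp cext [cComp cadd [cComp cmul [cconst 2; cComp ccpair [cProj 1; cProj 0]]; cconst 1]].
Lemma CF_G : CF r cG (fun v => ext (2 * cpair (ar v 1) (ar v 0) + 1)).
Proof. unfold cG. cfx. all: f_equal; lia. Qed.

Definition cSearch := cMu cG.
Lemma ev_search m w : ext (2 * cpair m w + 1) = 0 ->
  (forall w', w' < w -> ext (2 * cpair m w' + 1) <> 0) -> ev r cSearch [m] w.
Proof. intros H1 H2. eapply ev_mu_lemma. apply CF_G. cbn [nth]. auto. intros. cbn [nth]. auto. Qed.

Definition bitv : nat := 1 - par (fst (unpair (r 1))).
Definition cbit := cComp csub [cconst 1; cComp cpar [cComp cfst [cComp cOracle [cconst 1]]]].
Lemma CF_bit : CF r cbit (fun _ => bitv).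
Proof. unfold cbit. cfx. Qed.

Definition cH := rk 0 cbit (cComp cfst [cComp cSearch [cComp chalf [cProj 0]]]).

Lemma H_main (qlim : nat -> nat) :
  (forall m, exists w, ev r cSearch [m] w /\ fst (unpair w) = qlim m) ->
  computes cH r (fun n => match n with 0 => bitv | S n' => qlim (Nat.div2 n') end).
Proof.
  intros Hs n. unfold cH, rk. eapply ev_comp. apply (evs_proj r [0] [n]). simpl.
  induction n.
  - constructor. apply CF_bit.
  - eapply ev_recS. apply IHn.
    destruct (Hs (Nat.div2 n)) as [w [Hw Ew]].
    eapply ev_comp. constructor. 2: constructor.
    eapply ev_comp. constructor. 2: constructor.
    eapply ev_comp. constructor. 2: constructor. apply ev_proj. apply (CF_half r).
    exact Hw. rewrite <- Ew. apply (CF_fst r [w]).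
Qed.
End H.

Local Open Scope R_scope.

Lemma INR_pow4 n : INR (pow4 n) = 4 ^ n.
Proof. induction n. reflexivity. change (pow4 (S n)) with (4 * pow4 n)%nat. rewrite mult_INR, IHn. simpl. lra. Qed.

Lemma INR4 : INR 4 = 4.
Proof. simpl. lra. Qed.
Lemma INR3 : INR 3 = 3.
Proof. simpl. lra. Qed.

Lemma pow4_pos n : (1 <= pow4 n)%nat.
Proof. induction n; simpl; lia. Qed.

Lemma pow4_add a b : pow4 (a + b) = (pow4 a * pow4 b)%nat.
Proof. induction a; simpl; lia. Qed.

Lemma le_div_h x y c : 0 < c -> c * x <= y -> x <= y / c.
Proof. intros. apply Rmult_le_reg_l with c; auto. unfold Rdiv. replace (c * (y * / c)) with y by (field; lra). lra. Qed.
Lemma div_le_h x y c : 0 < c -> x <= y / c -> c * x <= y.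
Proof. intros. apply Rmult_le_compat_l with (r := c) in H0; [|lra]. unfold Rdiv in H0. replace (c * (y * / c)) with y in H0 by (field; lra). lra. Qed.

Section Alpha.
Variable D : nat -> nat -> nat.
Hypothesis Dle : forall L P, (D L P <= 1)%nat.
Hypothesis Dmono : forall L P, (D L P <= D (S L) P)%nat.

Fixpoint HornD (L P : nat) : nat := match P with 0 => 0%nat | S P => (4 * HornD L P + D L P)%nat end.

Lemma Dmono' L L' P : (L <= L')%nat -> (D L P <= D L' P)%nat.
Proof. induction 1. lia. specialize (Dmono m P). lia. Qed.

Lemma Horn_mono L L' P : (L <= L')%nat -> (HornD L P <= HornD L' P)%nat.
Proof. intro H. induction P; simpl. lia. pose proof (Dmono' L L' P H). lia. Qed.

Lemma Horn_bound L P : (3 * HornD L P + 1 <= pow4 P)%nat.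
Proof. induction P; simpl. lia. specialize (Dle L P). lia. Qed.

Lemma Horn_split L a b : exists R, HornD L (a + b) = (HornD L a * pow4 b + R)%nat /\ (3 * R + 1 <= pow4 b)%nat.
Proof.
  induction b. exists 0%nat. rewrite Nat.add_0_r. simpl. lia.
  destruct IHb as [R [E B]]. exists (4 * R + D L (a + b))%nat.
  replace (a + S b)%nat with (S (a + b)) by lia. simpl HornD. rewrite E. simpl pow4.
  specialize (Dle L (a+b)). split; nia.
Qed.

Definition aL (L : nat) : R := INR (HornD L L) / 4 ^ L.

Lemma aL_nonneg L : 0 <= aL L.
Proof. unfold aL. apply Rmult_le_pos. apply pos_INR. left. apply Rinv_0_lt_compat, pow_lt. lra. Qed.

Lemma aL_bound L : aL L <= 1/3.
Proof.
  unfold aL. pose proof (Horn_bound L L). apply le_INR in H.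
  rewrite plus_INR, mult_INR, INR_pow4 in H. simpl INR in H.
  assert (0 < 4 ^ L) by (apply pow_lt; lra).
  apply Rmult_le_reg_r with (4 ^ L); auto. unfold Rdiv. rewrite Rmult_assoc, Rinv_l by lra. lra.
Qed.

Lemma aL_S L : aL L <= aL (S L).
Proof.
  unfold aL. assert (4 * HornD L L <= HornD (S L) (S L))%nat.
  { simpl HornD at 2. pose proof (Horn_mono L (S L) L ltac:(lia)). lia. }
  apply le_INR in H. rewrite mult_INR, INR4 in H.
  assert (0 < 4 ^ L) by (apply pow_lt; lra). simpl pow.
  unfold Rdiv. rewrite Rinv_mult.
  apply Rmult_le_reg_r with (4 * 4 ^ L). lra.
  replace (INR (HornD (S L) (S L)) * (/ 4 * / 4 ^ L) * (4 * 4 ^ L)) with (INR (HornD (S L) (S L))).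
  2:{ field. lra. }
  replace (INR (HornD L L) * / 4 ^ L * (4 * 4 ^ L)) with (4 * INR (HornD L L)) by (field; lra).
  lra.
Qed.

Lemma aL_mono L L' : (L <= L')%nat -> aL L <= aL L'.
Proof. induction 1. lra. pose proof (aL_S m). lra. Qed.

Definition aset (z : R) : Prop := exists L, z = aL L.
Lemma aset_bound : bound aset.
Proof. exists (1/3). intros z [L ->]. apply aL_bound. Qed.
Lemma aset_ex : exists z, aset z.
Proof. exists (aL 0). exists 0%nat. reflexivity. Qed.

Definition alpha : R := proj1_sig (completeness aset aset_bound aset_ex).

Lemma alpha_ge L : aL L <= alpha.
Proof. unfold alpha. destruct (completeness _ _ _) as [m [H1 H2]]. simpl. apply H1. exists L; auto. Qed.

Lemma alpha_le M : (forall L, aL L <= M) -> alpha <= M.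
Proof. intro H. unfold alpha. destruct (completeness _ _ _) as [m [H1 H2]]. simpl. apply H2.
  intros z [L ->]. apply H. Qed.

Lemma alpha_bounds : 0 <= alpha <= 1/3.
Proof. split. pose proof (alpha_ge 0). pose proof (aL_nonneg 0). lra. apply alpha_le. apply aL_bound. Qed.

Lemma aL_split P0 L : (S P0 <= L)%nat ->
  INR (HornD L (S P0)) <= 4 ^ (S P0) * aL L <= INR (HornD L (S P0)) + 1/3.
Proof.
  intro HL. destruct (Horn_split L (S P0) (L - S P0)) as [R [E B]].
  replace (S P0 + (L - S P0))%nat with L in E by lia.
  unfold aL. rewrite E. apply le_INR in B.
  rewrite plus_INR, mult_INR, INR_pow4 in B. rewrite plus_INR, mult_INR, INR_pow4. simpl INR in B.
  replace (4 ^ L) with (4 ^ S P0 * 4 ^ (L - S P0)) by (rewrite <- pow_add; f_equal; lia).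
  set (a := 4 ^ S P0). set (c := 4 ^ (L - S P0)).
  assert (0 < a) by (apply pow_lt; lra). assert (0 < c) by (apply pow_lt; lra).
  replace (a * ((INR (HornD L (S P0)) * c + INR R) / (a * c))) with (INR (HornD L (S P0)) + INR R / c) by (field; lra).
  pose proof (pos_INR R). split.
  assert (0 <= INR R / c) by (apply Rmult_le_pos; [lra| left; apply Rinv_0_lt_compat; lra]). lra.
  assert (INR R / c <= 1/3). { apply Rmult_le_reg_r with c; auto. unfold Rdiv. rewrite Rmult_assoc, Rinv_l by lra. unfold c in *. lra. }
  lra.
Qed.

Lemma D_stab P : exists L0, forall L, (L0 <= L)%nat -> D L P = D L0 P.
Proof.
  destruct (classic (exists L, D L P = 1%nat)) as [[L1 H]|H].
  - exists L1. intros L HL. pose proof (Dmono' _ _ P HL). pose proof (Dle L P). lia.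
  - exists 0%nat. intros L _. assert (forall L, D L P = 0%nat).
    { intro L'. pose proof (Dle L' P). destruct (D L' P) as [|[|]] eqn:E; try lia. exfalso; eauto. }
    rewrite !H0. reflexivity.
Qed.

Lemma Horn_stab P : exists L0, forall L, (L0 <= L)%nat -> HornD L P = HornD L0 P.
Proof.
  induction P. exists 0%nat. reflexivity.
  destruct IHP as [L1 H1]. destruct (D_stab P) as [L2 H2].
  exists (Nat.max L1 L2). intros L HL. simpl.
  rewrite (H1 L), (H2 L), (H1 (Nat.max L1 L2)), (H2 (Nat.max L1 L2)); lia.
Qed.

Lemma digit_lemma P0 : exists L0, forall L, (L0 <= L)%nat ->
  INR (HornD L (S P0)) <= 4 ^ (S P0) * alpha <= INR (HornD L (S P0)) + 1/3.
Proof.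
  destruct (Horn_stab (S P0)) as [L0 H0]. exists L0. intros L HL.
  rewrite (H0 L HL). set (L1 := Nat.max L0 (S P0)).
  assert (K1 : forall L', (L1 <= L')%nat -> INR (HornD L0 (S P0)) <= 4 ^ (S P0) * aL L' <= INR (HornD L0 (S P0)) + 1/3).
  { intros L' HL'. rewrite <- (H0 L') by lia. apply aL_split. lia. }
  assert (0 < 4 ^ S P0) by (apply pow_lt; lra).
  split.
  - pose proof (alpha_ge L1). destruct (K1 L1 (le_n _)). nra.
  - assert (alpha <= (INR (HornD L0 (S P0)) + 1/3) / 4 ^ S P0).
    { apply alpha_le. intro L'. pose proof (aL_mono L' (Nat.max L' L1) ltac:(lia)).
      destruct (K1 (Nat.max L' L1) ltac:(lia)).
      apply le_div_h; auto. nra. }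
    apply div_le_h in H1; auto.
Qed.

End Alpha.

Lemma compare_lemma Da Db (Dla : forall L P, (Da L P <= 1)%nat) (Dma : forall L P, (Da L P <= Da (S L) P)%nat)
  (Dlb : forall L P, (Db L P <= 1)%nat) (Dmb : forall L P, (Db L P <= Db (S L) P)%nat) P0 L0 K :
  (forall L, (L0 <= L)%nat -> HornD Da L P0 = K /\ HornD Db L P0 = K /\ Da L P0 = 0%nat /\ Db L P0 = 1%nat) ->
  alpha Da Dla < alpha Db Dlb.
Proof.
  intro H.
  assert (0 < 4 ^ S P0) by (apply pow_lt; lra).
  assert (Ha : forall L, (HornD Da L (S P0) <= 4 * K)%nat).
  { intro L. pose proof (Horn_mono Da Dma L (Nat.max L L0) (S P0) ltac:(lia)).
    destruct (H (Nat.max L L0) ltac:(lia)) as [E1 [_ [E3 _]]]. simpl in H1 |- *. lia. }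
  set (L1 := Nat.max L0 (S P0)).
  assert (alpha Da Dla <= (4 * INR K + 1/3) / 4 ^ S P0).
  { apply alpha_le. intro L. pose proof (aL_mono Da Dma L (Nat.max L (S P0)) ltac:(lia)).
    destruct (aL_split Da Dla P0 (Nat.max L (S P0)) ltac:(lia)).
    pose proof (Ha (Nat.max L (S P0))). apply le_INR in H4. rewrite mult_INR, INR4 in H4.
    apply le_div_h; auto. nra. }
  assert (4 * INR K + 1 <= 4 ^ S P0 * alpha Db Dlb).
  { destruct (H L1 ltac:(lia)) as [_ [E2 [_ E4]]].
    destruct (aL_split Db Dlb P0 L1 ltac:(lia)). pose proof (alpha_ge Db Dlb L1).
    simpl HornD in H2. rewrite E2, E4 in H2. replace (K + (K + (K + (K + 0))) + 1)%nat with (4 * K + 1)%nat in H2 by lia. rewrite plus_INR, mult_INR, INR4 in H2. simpl (INR 1) in H2. nra. }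
  apply div_le_h in H1; auto.
  nra.
Qed.

Local Open Scope R_scope.

Lemma dbl_facts n : Nat.div2 (2 * n) = n /\ Nat.div2 (S (2 * n)) = n /\
  Nat.even (2 * n) = true /\ Nat.even (S (2 * n)) = false.
Proof.
  induction n. simpl; auto.
  replace (2 * S n)%nat with (S (S (2 * n))) by lia.
  destruct IHn as [A [B [C D]]].
  change (Nat.div2 (S (S (2 * n)))) with (S (Nat.div2 (2 * n))).
  change (Nat.div2 (S (S (S (2 * n))))) with (S (Nat.div2 (S (2 * n)))).
  rewrite A, B. cbn [Nat.even]. auto.
Qed.

Lemma par_even n : par n = (if Nat.even n then 0 else 1)%nat.
Proof. unfold par. rewrite <- Nat.negb_even. destruct (Nat.even n); reflexivity. Qed.

Definition sgn_val (i : nat) : R := if Nat.even i then INR (Nat.div2 i) else - INR (S (Nat.div2 i)).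

Lemma qdec_eq i j : qdec i j = sgn_val i / INR (S j).
Proof.
  unfold qdec, Q2R, sgn_val. cbn [Qnum Qden]. rewrite Zpos_P_of_succ_nat.
  rewrite <- Nat2Z.inj_succ, <- INR_IZR_INZ. unfold Rdiv. f_equal.
  unfold zdec. destruct (Nat.even i). symmetry; apply INR_IZR_INZ.
  rewrite opp_IZR, <- INR_IZR_INZ. reflexivity.
Qed.

Lemma qdec_abs i j : Rabs (qdec i j) = INR (extu i) / INR (S j).
Proof.
  rewrite qdec_eq. unfold sgn_val, extu. rewrite par_even.
  assert (0 < INR (S j)) by (apply lt_0_INR; lia).
  unfold Rdiv. rewrite Rabs_mult, Rabs_inv, (Rabs_right (INR (S j))) by lra.
  destruct (Nat.even i). rewrite Rabs_right. reflexivity. apply Rle_ge, pos_INR.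
  rewrite Rabs_Ropp, Rabs_right. reflexivity. apply Rle_ge, pos_INR.
Qed.

Lemma qdec_sign i j : (Nat.even i = true -> 0 <= qdec i j) /\ (Nat.even i = false -> qdec i j < 0).
Proof.
  rewrite qdec_eq. unfold sgn_val. assert (0 < INR (S j)) by (apply lt_0_INR; lia).
  assert (0 < / INR (S j)) by (apply Rinv_0_lt_compat; lra).
  split; intro E; rewrite E; unfold Rdiv.
  apply Rmult_le_pos. apply pos_INR. lra.
  assert (0 < INR (S (Nat.div2 i))) by (apply lt_0_INR, Nat.lt_0_succ). nra.
Qed.

Lemma qdec_neg N E : (1 <= N)%nat -> (1 <= E)%nat -> qdec (2 * N - 1) (E - 1) = - INR N / INR E.
Proof.
  intros. rewrite qdec_eq. unfold sgn_val. replace (2 * N - 1)%nat with (S (2 * (N - 1))) by lia.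
  destruct (dbl_facts (N - 1)) as [_ [B [_ D]]]. rewrite D, B.
  replace (S (N - 1)) with N by lia. replace (S (E - 1)) with E by lia. reflexivity.
Qed.

Lemma qdec_pos N E : (1 <= E)%nat -> qdec (2 * N) (E - 1) = INR N / INR E.
Proof.
  intros. rewrite qdec_eq. unfold sgn_val.
  destruct (dbl_facts N) as [A [_ [C _]]]. rewrite C, A.
  replace (S (E - 1)) with E by lia. reflexivity.
Qed.

Lemma pow_half_eq P : (/ 2) ^ (2 * P + 6) = / (16 * 4 ^ S P).
Proof.
  rewrite pow_inv. f_equal. replace (2 * P + 6)%nat with (2 * (S (S (S P))))%nat by lia.
  rewrite pow_mult. replace (2 ^ 2) with 4 by ring. simpl. ring.
Qed.

Section Main.
Variable p : baire.
Hypothesis Hp : forall m, (p (2 * m) <= 1)%nat.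

Lemma c1_le L : (c1 p L <= L)%nat.
Proof. induction L; cbn [c1]. lia. specialize (Hp L). lia. Qed.

Lemma exf_le t m v L : (exf p t m v L <= 1)%nat.
Proof. induction L; simpl. lia. unfold b2. destruct (t <=? L); destruct (negb (qv p L m =? v)); lia. Qed.

Lemma Dig_le sd L P : (Dig p sd L P <= 1)%nat.
Proof. unfold Dig. destruct (par P). unfold b2. destruct (_ <? _); lia. apply exf_le. Qed.

Lemma Dig_mono sd L P : (Dig p sd L P <= Dig p sd (S L) P)%nat.
Proof.
  unfold Dig. destruct (par P).
  - assert (Hc : (match sd with O => c1 p L | S _ => L - c1 p L end <= match sd with O => c1 p (S L) | S _ => S L - c1 p (S L) end)%nat).
    { cbn [c1]. pose proof (Hp L). pose proof (c1_le L). destruct sd; lia. }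
    unfold b2. destruct (Nat.div2 P <? _) eqn:E1; destruct (Nat.div2 P <? match sd with O => c1 p (S L) | S _ => S L - c1 p (S L) end) eqn:E2; try lia.
    apply Nat.ltb_lt in E1. apply Nat.ltb_ge in E2. lia.
  - simpl. lia.
Qed.

Lemma Horn_eq sd L P : Horn p sd L P = HornD (Dig p sd) L P.
Proof. induction P; cbn [Horn HornD]; auto. Qed.

Definition Da := Dig p 0.
Definition Db := Dig p 1.
Definition aa := alpha Da (Dig_le 0).
Definition ab := alpha Db (Dig_le 1).

Lemma Kq_odd n : Kq p (S (2 * n)) =
  S (cpair (cpair (2 * (pow4 n + Horn p 0 n n) - 1) (pow4 n - 1)) (cpair (2 * (pow4 n + Horn p 1 n n)) (pow4 n - 1))).
Proof. unfold Kq. rewrite par_even. destruct (dbl_facts n) as [_ [B [_ D]]]. rewrite D, B. reflexivity. Qed.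

Lemma Kq_even n : Kq p (2 * n) = 0%nat.
Proof. unfold Kq. rewrite par_even. destruct (dbl_facts n) as [_ [_ [C _]]]. rewrite C. reflexivity. Qed.

Lemma frac_eq N H L : INR (N + H) / INR N = 1 + INR H / 4 ^ L -> True.
Proof. auto. Qed.

Lemma end_a n : qdec (2 * (pow4 n + Horn p 0 n n) - 1) (pow4 n - 1) = - (1 + aL Da n).
Proof.
  pose proof (pow4_pos n). rewrite qdec_neg by lia. rewrite plus_INR, INR_pow4, Horn_eq.
  unfold aL, Da. assert (0 < 4 ^ n) by (apply pow_lt; lra). field. lra.
Qed.

Lemma end_b n : qdec (2 * (pow4 n + Horn p 1 n n)) (pow4 n - 1) = 1 + aL Db n.
Proof.
  pose proof (pow4_pos n). rewrite qdec_pos by lia. rewrite plus_INR, INR_pow4, Horn_eq.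
  unfold aL, Db. assert (0 < 4 ^ n) by (apply pow_lt; lra). field. lra.
Qed.

Definition Aset : R -> Prop := fun x =>
  ~ (exists n i j k l, Kq p (2 * n + 1) = S (cpair (cpair i j) (cpair k l)) /\ qdec i j < x < qdec k l).

Lemma Aset_char x : Aset x <-> x <= - (1 + aa) \/ 1 + ab <= x.
Proof.
  assert (Hex : (exists n i j k l, Kq p (2 * n + 1) = S (cpair (cpair i j) (cpair k l)) /\ qdec i j < x < qdec k l)
     <-> exists n, - (1 + aL Da n) < x < 1 + aL Db n).
  { split.
    - intros [n [i [j [k [l [E H]]]]]]. exists n.
      replace (2 * n + 1)%nat with (S (2 * n)) in E by lia. rewrite Kq_odd in E.
      apply eq_add_S in E. apply cpair_inj in E as [E1 E2].
      apply cpair_inj in E1 as [<- <-]. apply cpair_inj in E2 as [<- <-].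
      rewrite end_a, end_b in H. exact H.
    - intros [n H]. exists n, (2 * (pow4 n + Horn p 0 n n) - 1)%nat, (pow4 n - 1)%nat, (2 * (pow4 n + Horn p 1 n n))%nat, (pow4 n - 1)%nat. split.
      replace (2 * n + 1)%nat with (S (2 * n)) by lia. apply Kq_odd.
      rewrite end_a, end_b. exact H. }
  unfold Aset. rewrite Hex. split.
  - intro H. destruct (Rle_or_lt x (- (1 + aa))) as [H1|H1]. auto.
    destruct (Rle_or_lt (1 + ab) x) as [H2|H2]. auto. exfalso. apply H.
    assert (E1 : exists n, - x - 1 < aL Da n).
    { apply NNPP. intro N. assert (aa <= - x - 1). unfold aa. apply alpha_le. intro L.
      apply Rnot_lt_le. intro. apply N. eauto. lra. }
    assert (E2 : exists n, x - 1 < aL Db n).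
    { apply NNPP. intro N. assert (ab <= x - 1). unfold ab. apply alpha_le. intro L.
      apply Rnot_lt_le. intro. apply N. eauto. lra. }
    destruct E1 as [n1 E1]. destruct E2 as [n2 E2]. exists (Nat.max n1 n2).
    pose proof (aL_mono Da (Dig_mono 0) n1 (Nat.max n1 n2) ltac:(lia)).
    pose proof (aL_mono Db (Dig_mono 1) n2 (Nat.max n1 n2) ltac:(lia)). lra.
  - intros H [n Hn]. pose proof (alpha_ge Da (Dig_le 0) n). pose proof (alpha_ge Db (Dig_le 1) n).
    fold aa ab in *. lra.
Qed.

Lemma aa_bounds : 0 <= aa <= 1/3.
Proof. apply alpha_bounds. Qed.
Lemma ab_bounds : 0 <= ab <= 1/3.
Proof. apply alpha_bounds. Qed.

Lemma Aset_closed : closed_set Aset.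
Proof.
  intros x Hx. unfold complementary in Hx. rewrite Aset_char in Hx.
  assert (- (1 + aa) < x < 1 + ab) by (split; apply Rnot_le_lt; intro; apply Hx; auto).
  assert (0 < Rmin (x + (1 + aa)) (1 + ab - x)) by (apply Rmin_pos; lra).
  exists (mkposreal _ H0). intros z Hz. unfold disc in Hz. simpl in Hz.
  unfold complementary. rewrite Aset_char. pose proof (Rmin_l (x + (1 + aa)) (1 + ab - x)).
  pose proof (Rmin_r (x + (1 + aa)) (1 + ab - x)). apply Rabs_def2 in Hz. lra.
Qed.

Lemma Proj_dom : mdom Proj (0, Aset).
Proof.
  pose proof aa_bounds. pose proof ab_bounds.
  assert (HA1 : Aset (- (1 + aa))) by (apply Aset_char; lra).
  assert (HA2 : Aset (1 + ab)) by (apply Aset_char; lra).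
  assert (Hlow : forall z, Aset z -> Rmin (1 + aa) (1 + ab) <= Rabs (0 - z)).
  { intros z Hz. apply Aset_char in Hz. unfold Rminus. rewrite Rplus_0_l, Rabs_Ropp.
    destruct Hz. rewrite Rabs_left by lra. pose proof (Rmin_l (1 + aa) (1 + ab)). lra.
    rewrite Rabs_right by lra. pose proof (Rmin_r (1 + aa) (1 + ab)). lra. }
  destruct (Rle_or_lt aa ab).
  - exists (- (1 + aa)). unfold Proj. cbn [fst snd]. split. apply Aset_closed. split. eauto. split. auto.
    replace (Rabs (0 - - (1 + aa))) with (1 + aa) by (rewrite Rminus_0_l, Ropp_involutive, Rabs_right; lra).
    split. intros z [a [Ha ->]]. specialize (Hlow a Ha). rewrite Rmin_left in Hlow by lra. auto.
    intros m' Hm. apply Hm. exists (- (1 + aa)). split. auto. rewrite Rminus_0_l, Ropp_involutive, Rabs_right; lra.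
  - exists (1 + ab). unfold Proj. cbn [fst snd]. split. apply Aset_closed. split. eauto. split. auto.
    replace (Rabs (0 - (1 + ab))) with (1 + ab) by (rewrite Rminus_0_l, Rabs_Ropp, Rabs_right; lra).
    split. intros z [a [Ha ->]]. specialize (Hlow a Ha). rewrite Rmin_right in Hlow by lra. auto.
    intros m' Hm. apply Hm. exists (1 + ab). split. auto. rewrite Rminus_0_l, Rabs_Ropp, Rabs_right; lra.
Qed.

Lemma Proj_out y : Proj (0, Aset) y ->
  (y = - (1 + aa) /\ aa <= ab) \/ (y = 1 + ab /\ ab <= aa).
Proof.
  unfold Proj. cbn [fst snd]. intros [_ [_ [Hy [Hinf _]]]].
  pose proof aa_bounds. pose proof ab_bounds.
  assert (H1 : Rabs (0 - y) <= 1 + aa).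
  { replace (1 + aa) with (Rabs (0 - - (1 + aa))) by (rewrite Rminus_0_l, Ropp_involutive, Rabs_right; lra).
    apply Hinf. exists (- (1 + aa)). split. apply Aset_char; lra. auto. }
  assert (H2 : Rabs (0 - y) <= 1 + ab).
  { replace (1 + ab) with (Rabs (0 - (1 + ab))) by (rewrite Rminus_0_l, Rabs_Ropp, Rabs_right; lra).
    apply Hinf. exists (1 + ab). split. apply Aset_char; lra. auto. }
  rewrite Rminus_0_l, Rabs_Ropp in H1, H2.
  apply Aset_char in Hy. destruct Hy.
  - left. rewrite Rabs_left in H1, H2 by lra. split; lra.
  - right. rewrite Rabs_right in H1, H2 by lra. split; lra.
Qed.

End Main.

Local Open Scope R_scope.

Lemma Rabs_le_both z e : Rabs z <= e -> - e <= z <= e.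
Proof. intro H. destruct (Rcase_abs z). rewrite Rabs_left in H by lra. lra. rewrite Rabs_right in H by lra. lra. Qed.

Lemma ext_correct r y D (Dl : forall L P, (D L P <= 1)%nat) (Dm : forall L P, (D L P <= D (S L) P)%nat) :
  dR r y -> Rabs y = 1 + alpha D Dl ->
  forall P, exists L0, forall L, (L0 <= L)%nat -> ext r P = D L P.
Proof.
  intros Hr Hy P.
  destruct (digit_lemma D Dl Dm P) as [L0 HL]. exists L0. intros L HLL. specialize (HL L HLL).
  set (Kn := HornD D L (S P)) in *.
  set (al := alpha D Dl) in *.
  destruct (Hr (2 * P + 6)%nat) as [i [j [Er Eb]]].
  assert (Hq : extK r P = (pow4 (S P) + Kn)%nat).
  { unfold extK. rewrite Er, unpair_cpair. cbn [fst snd].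
    set (u := INR (extu i)). set (d := INR (S j)). set (E := 4 ^ S P).
    assert (Hd : 0 < d) by (apply lt_0_INR; lia).
    assert (HE : 0 < E) by (apply pow_lt; lra).
    assert (Hw : Rabs (u / d - (1 + al)) <= / (16 * E)).
    { replace (/ (16 * E)) with ((/ 2) ^ (2 * P + 6)) by (unfold E; apply pow_half_eq). unfold u, d. rewrite <- qdec_abs, <- Hy.
      eapply Rle_trans. apply Rabs_triang_inv2. exact Eb. }
    apply Rabs_le_both in Hw.
    set (w := u / d) in *. assert (Hu : u = w * d) by (unfold w; field; lra).
    assert (F : / (16 * E) * E = / 16) by (field; lra).
    assert (W1 : w * E >= E + al * E - / 16) by nra.
    assert (W2 : w * E <= E + al * E + / 16) by nra.
    assert (HKn : INR Kn <= E * al <= INR Kn + 1/3) by exact HL. rewrite (Rmult_comm al E) in W1, W2.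
    symmetry. apply Nat.div_unique with (r := ((2 * extu i * pow4 (S P) + S j) - S (2 * j + 1) * (pow4 (S P) + Kn))%nat).
    - assert (INR (2 * extu i * pow4 (S P) + S j) < INR (S (2 * j + 1) * (pow4 (S P) + Kn + 1))).
      { rewrite mult_INR. replace (INR (S (2 * j + 1))) with (2 * d).
        2:{ unfold d. rewrite !S_INR, plus_INR, mult_INR. simpl. ring. }
        rewrite !plus_INR, !mult_INR, INR_pow4. fold u E d.
        replace (INR 2) with 2 by (simpl; ring). replace (INR 1) with 1 by (simpl; ring). rewrite Hu.
        assert (w * E < E + INR Kn + 1/2) by lra. nra. }
      apply INR_lt in H. nia.
    - assert (INR (S (2 * j + 1) * (pow4 (S P) + Kn)) <= INR (2 * extu i * pow4 (S P) + S j)).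
      { rewrite mult_INR. replace (INR (S (2 * j + 1))) with (2 * d).
        2:{ unfold d. rewrite !S_INR, plus_INR, mult_INR. simpl. ring. }
        rewrite !plus_INR, !mult_INR, INR_pow4. fold u E d.
        replace (INR 2) with 2 by (simpl; ring). rewrite Hu.
        assert (w * E >= E + INR Kn - 1/4) by lra. nra. }
      apply INR_le in H. lia. }
  unfold ext. rewrite Hq. unfold Kn. cbn [HornD pow4].
  pose proof (Dl L P) as DLP.
  assert (E4 : ((4 * pow4 P + (4 * HornD D L P + D L P)) / S 3 = pow4 P + HornD D L P)%nat).
  { symmetry. apply Nat.div_unique with (r := D L P). lia. lia. }
  rewrite E4. lia.
Qed.

Local Open Scope R_scope.

Lemma b2_lt1 a b : (a < b)%nat -> b2 (a <? b) = 1%nat.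
Proof. intro H. apply Nat.ltb_lt in H. rewrite H. reflexivity. Qed.
Lemma b2_lt0 a b : (b <= a)%nat -> b2 (a <? b) = 0%nat.
Proof. intro H. apply Nat.ltb_ge in H. rewrite H. reflexivity. Qed.

Lemma par_div2 n : n = (2 * Nat.div2 n + par n)%nat.
Proof. rewrite (Nat.div2_odd n) at 1. unfold par. destruct (Nat.odd n); reflexivity. Qed.

Lemma exists_least (Pr : nat -> Prop) : (exists n, Pr n) -> exists n, Pr n /\ forall m, (m < n)%nat -> ~ Pr m.
Proof.
  intros [n Hn]. revert Hn. induction n using (well_founded_induction lt_wf). intro Hn.
  destruct (classic (exists m, (m < n)%nat /\ Pr m)) as [[m [Hm1 Hm2]]|Hno].
  - eapply H; eauto.
  - exists n. split; auto. intros m Hm Pm. apply Hno. eauto.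
Qed.

Section M.
Variable p : baire.
Hypothesis Hp : forall m, (p (2 * m) <= 1)%nat.

Lemma c1_mono L L' : (L <= L')%nat -> (c1 p L <= c1 p L')%nat.
Proof. induction 1. lia. cbn [c1]. lia. Qed.
Lemma c0_mono L L' : (L <= L')%nat -> (L - c1 p L <= L' - c1 p L')%nat.
Proof. induction 1. lia. cbn [c1]. pose proof (Hp m). pose proof (c1_le p Hp m). lia. Qed.

Lemma Dig_even sd L k : Dig p sd L (2 * k) = b2 (k <? match sd with O => c1 p L | S _ => L - c1 p L end).
Proof. unfold Dig. rewrite par_even. destruct (dbl_facts k) as [A [_ [C _]]]. rewrite C, A. reflexivity. Qed.

Lemma Dig_odd_same L P : par P <> 0%nat -> Dig p 0 L P = Dig p 1 L P.
Proof. unfold Dig. destruct (par P). congruence. reflexivity. Qed.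

Lemma Horn_agree Da' Db' L P0 : (forall P, (P < P0)%nat -> Da' L P = Db' L P) -> HornD Da' L P0 = HornD Db' L P0.
Proof. induction P0; intro H; cbn [HornD]. reflexivity. rewrite IHP0 by (intros; apply H; lia). rewrite (H P0) by lia. reflexivity. Qed.

Lemma agree_even C L : (forall k, (k < C)%nat -> Dig p 0 L (2 * k) = Dig p 1 L (2 * k)) ->
  forall P, (P < 2 * C)%nat -> Dig p 0 L P = Dig p 1 L P.
Proof.
  intros H P HP. destruct (par P) eqn:E.
  - rewrite (par_div2 P), E, Nat.add_0_r. apply H. rewrite (par_div2 P) in HP. lia.
  - apply Dig_odd_same. congruence.
Qed.

Lemma case_fin_true : (exists N, forall n, (N <= n)%nat -> p (2 * n)%nat = 0%nat) -> aa p < ab p.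
Proof.
  intros [N HN]. set (C := c1 p N).
  assert (Hc : forall L, (N <= L)%nat -> c1 p L = C).
  { induction 1. reflexivity. cbn [c1]. rewrite IHle, HN by lia. lia. }
  assert (Hc' : forall L, (c1 p L <= C)%nat).
  { intro L. rewrite <- (Hc (Nat.max L N)) by lia. apply c1_mono. lia. }
  destruct (Horn_stab (Dig p 0) (Dig_le p 0) (Dig_mono p Hp 0) (2 * C)) as [L2 H2].
  unfold aa, ab, Da, Db.
  apply (compare_lemma _ _ _ (Dig_mono p Hp 0) _ (Dig_mono p Hp 1) (2 * C) (Nat.max (Nat.max N L2) (2 * C + 1)) (HornD (Dig p 0) L2 (2 * C))).
  intros L HL. rewrite !Dig_even. rewrite (Hc L) by lia.
  split; [|split; [|split]].
  - apply H2. lia.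
  - rewrite <- (Horn_agree (Dig p 0)). apply H2. lia.
    apply agree_even. intros k Hk. rewrite !Dig_even, (Hc L) by lia. rewrite !b2_lt1; lia.
  - apply b2_lt0. lia.
  - apply b2_lt1. lia.
Qed.

Lemma case_fin_false : (exists N, forall n, (N <= n)%nat -> p (2 * n)%nat = 1%nat) -> ab p < aa p.
Proof.
  intros [N HN]. set (C := (N - c1 p N)%nat).
  pose proof (c1_le p Hp N).
  assert (Hc : forall L, (N <= L)%nat -> c1 p L = (c1 p N + (L - N))%nat).
  { induction 1. lia. cbn [c1]. rewrite IHle, HN by lia. lia. }
  assert (Hc' : forall L, (L - c1 p L <= C)%nat).
  { intro L. pose proof (c0_mono L (Nat.max L N) ltac:(lia)). rewrite (Hc (Nat.max L N)) in H0 by lia. lia. }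
  destruct (Horn_stab (Dig p 1) (Dig_le p 1) (Dig_mono p Hp 1) (2 * C)) as [L2 H2].
  unfold aa, ab, Da, Db.
  apply (compare_lemma _ _ _ (Dig_mono p Hp 1) _ (Dig_mono p Hp 0) (2 * C) (Nat.max (Nat.max N L2) (2 * C + 1)) (HornD (Dig p 1) L2 (2 * C))).
  intros L HL. rewrite !Dig_even. rewrite (Hc L) by lia.
  split; [|split; [|split]].
  - apply H2. lia.
  - rewrite (Horn_agree (Dig p 0) (Dig p 1)). apply H2. lia.
    apply agree_even. intros k Hk. rewrite !Dig_even, (Hc L) by lia. rewrite !b2_lt1; lia.
  - apply b2_lt0. lia.
  - apply b2_lt1. lia.
Qed.

Lemma exf_zero t m v : (forall j, (t <= j)%nat -> qv p j m = v) -> forall L, exf p t m v L = 0%nat.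
Proof.
  intros H L. induction L; cbn [exf]. reflexivity. rewrite IHL.
  destruct (t <=? L) eqn:E. apply Nat.leb_le in E. rewrite H by auto. rewrite Nat.eqb_refl. reflexivity.
  reflexivity.
Qed.

Lemma exf_one t m v j : (t <= j)%nat -> qv p j m <> v -> forall L, (j < L)%nat -> exf p t m v L = 1%nat.
Proof.
  intros H1 H2 L HL. induction HL; cbn [exf].
  - apply Nat.leb_le in H1. rewrite H1. apply Nat.eqb_neq in H2. rewrite H2.
    pose proof (exf_le p t m v j). cbn. lia.
  - rewrite IHHL. pose proof (Nat.le_max_l 1 (b2 (t <=? m0) * b2 (negb (qv p m0 m =? v)))).
    unfold b2 in *. destruct (t <=? m0); destruct (negb _); simpl in *; lia.
Qed.

Lemma Dig_pos sd L m w : Dig p sd L (2 * cpair m w + 1) = exf p (snd (unpair w)) m (fst (unpair w)) L.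
Proof.
  unfold Dig. replace (2 * cpair m w + 1)%nat with (S (2 * cpair m w)) by lia.
  rewrite par_even. destruct (dbl_facts (cpair m w)) as [_ [B [_ D]]]. rewrite D, B, unpair_cpair. reflexivity.
Qed.

End M.

Local Open Scope R_scope.

Lemma bit_ok r y : dR r y -> (y <= -1 -> bitv r = 0%nat) /\ (1 <= y -> bitv r = 1%nat).
Proof.
  intro Hr. destruct (Hr 1%nat) as [i [j [E B]]]. unfold bitv. rewrite E, unpair_cpair. cbn [fst].
  rewrite par_even. destruct (qdec_sign i j) as [S1 S2]. simpl pow in B. rewrite Rmult_1_r in B.
  apply Rabs_le_both in B.
  split; intro Hy; destruct (Nat.even i) eqn:Ei; auto.
  - specialize (S1 eq_refl). lra.
  - specialize (S2 eq_refl). lra.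
Qed.

Section S.
Variable p : baire.
Hypothesis Hp : forall m, (p (2 * m) <= 1)%nat.

Lemma search_ok r y sd : dR r y -> Rabs y = 1 + alpha (Dig p sd) (Dig_le p sd) ->
  forall m v0 N, (forall j, (N <= j)%nat -> qv p j m = v0) ->
  exists w, ev r cSearch [m] w /\ fst (unpair w) = v0.
Proof.
  intros Hr Hy m v0 N HN.
  pose proof (ext_correct r y (Dig p sd) (Dig_le p sd) (Dig_mono p Hp sd) Hr Hy) as EC.
  set (Z := fun w => forall j, (snd (unpair w) <= j)%nat -> qv p j m = fst (unpair w)).
  assert (HZ : forall w, Z w <-> ext r (2 * cpair m w + 1) = 0%nat).
  { intro w. destruct (EC (2 * cpair m w + 1)%nat) as [L0 HL0]. split.
    - intro Zw. rewrite (HL0 L0) by lia. rewrite Dig_pos. apply exf_zero. exact Zw.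
    - intro E. apply NNPP. intro nZ. unfold Z in nZ.
      apply not_all_ex_not in nZ as [j nZ]. apply imply_to_and in nZ as [Hj nZ].
      rewrite (HL0 (Nat.max L0 (S j))) in E by lia. rewrite Dig_pos in E.
      rewrite (exf_one p _ _ _ j Hj nZ) in E by lia. discriminate. }
  assert (Hex : exists w, Z w).
  { exists (cpair v0 N). unfold Z. rewrite unpair_cpair. cbn [fst snd]. exact HN. }
  destruct (exists_least Z Hex) as [w0 [Z0 Hmin]].
  exists w0. split.
  - apply ev_search. apply HZ, Z0. intros w' Hw' E. apply (Hmin w' Hw'). apply HZ. exact E.
  - unfold Z in Z0. rewrite <- (Z0 (Nat.max (snd (unpair w0)) N)) by lia. apply HN. lia.
Qed.

End S.

Theorem lemma4p12 :
  sW_reducible (dprod dCantor dSeq) (dprod dBool dBaire) (mvprod BWT2 lim)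
               (dprod dR dA) dR Proj.
Proof.
  exists cH, cKq. intros G HG p [s qs] [Hs Hqs] [[b ql] [Hb Hl]].
  cbn [fst snd] in *.
  assert (Hp : forall m, (p (2 * m) <= 1)%nat).
  { intro m. rewrite (Hs m). destruct (s m); lia. }
  exists (Kq p). split.
  { intro n. exact (CF_Kq p [n]). }
  assert (HX : dprod dR dA (Kq p) (0, Aset p)).
  { split; cbn [fst snd].
    - intro n. exists 0%nat, 0%nat. split. rewrite Kq_even. reflexivity.
      replace (qdec 0 0) with 0. rewrite Rminus_0_r, Rabs_R0. apply pow_le. lra.
      rewrite qdec_eq. unfold sgn_val. simpl. unfold Rdiv. ring.
    - intro x. unfold Aset. tauto. }
  destruct (HG (Kq p) (0, Aset p) HX (Proj_dom p Hp)) as [r [Gr [y [Hry Hy]]]].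
  exists r. split. exact Gr.
  pose proof (aa_bounds p) as Ba. pose proof (ab_bounds p) as Bb.
  pose proof (Proj_out p Hp y Hy) as Hout.
  assert (Hsearch : forall m, exists w, ev r cSearch [m] w /\ fst (unpair w) = ql m).
  { intro m. destruct (Hl (S m)) as [N HN].
    assert (HN' : forall j, (N <= j)%nat -> qv p j m = ql m).
    { intros j Hj. unfold qv. rewrite (Hqs j m). apply (HN j Hj m). lia. }
    destruct Hout as [[Ey _]|[Ey _]].
    - apply (search_ok p Hp r y 0 Hry) with (N := N); auto.
      rewrite Ey. rewrite Rabs_left by lra. fold (Da p). fold (aa p). lra.
    - apply (search_ok p Hp r y 1 Hry) with (N := N); auto.
      rewrite Ey. rewrite Rabs_right by lra. fold (Db p). fold (ab p). lra. }
  exists (fun n => match n with 0%nat => bitv r | S n' => ql (Nat.div2 n') end). split.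
  { apply H_main. exact Hsearch. }
  exists (Nat.eqb (bitv r) 1, ql). split.
  { split; cbn [fst snd].
    - unfold dBool. simpl. unfold bitv. pose proof (par_le (fst (unpair (r 1%nat)))).
      destruct (1 - par (fst (unpair (r 1%nat))))%nat as [|[|]] eqn:E; simpl; lia.
    - intro n. replace (2 * n + 1)%nat with (S (2 * n)) by lia. destruct (dbl_facts n) as [A _]. rewrite A. reflexivity. }
  split; cbn [fst snd]; [|exact Hl].
  destruct (bit_ok r y Hry) as [B0 B1].
  destruct Hout as [[Ey Hle]|[Ey Hle]].
  - rewrite B0 by lra. simpl. intro N. apply NNPP. intro HnN.
    assert (Hfin : exists N, forall n, (N <= n)%nat -> p (2 * n)%nat = 1%nat).
    { exists N. intros n Hn. rewrite (Hs n). destruct (s n) eqn:E; auto. exfalso. apply HnN. eauto. }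
    pose proof (case_fin_false p Hp Hfin). lra.
  - rewrite B1 by lra. simpl. intro N. apply NNPP. intro HnN.
    assert (Hfin : exists N, forall n, (N <= n)%nat -> p (2 * n)%nat = 0%nat).
    { exists N. intros n Hn. rewrite (Hs n). destruct (s n) eqn:E; auto. exfalso. apply HnN. eauto. }
    pose proof (case_fin_true p Hp Hfin). lra.
Qed.
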